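(* There exists a temporal clique $G$ on $n$ vertices such that every temporal $2$-spanner of $G$ has size $\Omega(n^2)$.
   Context: A temporal graph is an undirected graph $G=(V,E)$ with a labeling $\lambda: E\to\mathbb{N}^+$; a temporal clique is one whose underlying graph is complete. A temporal path is a path whose traversed edges have non-decreasing labels in the order of traversal; its length is its number of edges, and $d_G(u,v)$ is the minimum length of a temporal path from $u$ to $v$ in $G$ ($+\infty$ if none). A temporal $\alpha$-spanner of $G$ is a subgraph $H$ with $V(H)=V$, $E(H)\subseteq E$ (same labels), such that $d_H(u,v)\le\alpha\, d_G(u,v)$ for all $u,v\in V$. The size of $H$ is its number of edges. *)

(* Defs.v *)
From mathcomp Require Import all_boot.
Set Implicit Arguments. Unset Strict Implicit. Unset Printing Implicit Defensive.

(* An (undirected) edge is a 2-element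
   subset {x,y} of 'I_n. A labeling is a
   function lam : {set 'I_n} -> nat (only its values on edges matter). *)

Definition clique_edges (n : nat) : {set {set 'I_n}} := [set e : {set 'I_n} | #|e| == 2].

Definition traversed {n : nat} (u : 'I_n) (p : seq 'I_n) : seq {set 'I_n} :=
  pairmap (fun x y => [set x; y]) u p.

(* u :: p is a temporal path in (E, lam): distinct vertices, consecutive
   vertices joined by an edge of E, labels non-decreasing along the path.
   Its length is size p; it goes from u to last u p. *)
Definition temporal_path {n : nat} (E : {set {set 'I_n}}) (lam : {set 'I_n} -> nat)
    (u : 'I_n) (p : seq 'I_n) : bool :=
  [&& uniq (u :: p),
      path (fun x y => (x != y) && ([set x; y] \in E)) u p
    & sorted leq (map lam (traversed u p))].

(* H is a temporal alpha-spanner of G (edge sets E_H, E_G, same labeling lam):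
   E_H is a subset of E_G and d_H(u,v) <= alpha * d_G(u,v) for all u, v.
   Unfolded: whenever G has a temporal u-v path of length k, H has one of
   length at most alpha * k (if d_G(u,v) = +oo the condition is vacuous). *)
Definition temporal_spanner {n : nat} (alpha : nat) (EG EH : {set {set 'I_n}})
    (lam : {set 'I_n} -> nat) : Prop :=
  EH \subset EG /\
  forall (u : 'I_n) (p : seq 'I_n), temporal_path EG lam u p ->
    exists q : seq 'I_n,
      [/\ temporal_path EH lam u q, last u q = last u p & size q <= alpha * size p].

(* Main.v *)
Require Import Defs.
From mathcomp Require Import all_boot.
From mathcomp Require Import zify.

Definition Aset (n : nat) : {set 'I_n} := [set i : 'I_n | i < n./2].

Definition lamA (n : nat) (e : {set 'I_n}) : nat :=
  if e \subset Aset n then 3 else if e \subset ~: Aset n then 1 else 2.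

Lemma card_lt_set n k : k <= n -> #|[set i : 'I_n | i < k]| = k.
Proof.
move=> kn.
have -> : [set i : 'I_n | i < k] = widen_ord kn @: [set: 'I_k].
  apply/setP=> i; rewrite inE; apply/idP/imsetP.
    by move=> ik; exists (Ordinal ik); rewrite ?inE //; apply: val_inj.
  by case=> j _ ->; rewrite /= ltn_ord.
rewrite card_imset ?cardsT ?card_ord //.
by move=> x y /(congr1 val) /= /val_inj.
Qed.

Lemma sub2 n (A : {set 'I_n}) x y : ([set x; y] \subset A) = (x \in A) && (y \in A).
Proof. by rewrite subUset !sub1set. Qed.

Lemma forced n (H : {set {set 'I_n}}) a b :
  temporal_spanner 2 (clique_edges n) H (@lamA n) ->
  a \in Aset n -> b \notin Aset n -> [set a; b] \in H.
Proof.
move=> [_ Hsp] aA bA.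
have ab : a != b by apply: contraNneq bA => <-.
have tp : temporal_path (clique_edges n) (@lamA n) a [:: b].
  by rewrite /temporal_path /= !inE ab /= cards2 ab.
have [q [tq lq sq]] := Hsp a [:: b] tp.
move: tq lq sq; rewrite /temporal_path.
case: q => [|x [|w [|? ?]]] //=.
- by move=> _ ba; move: ab; rewrite ba eqxx.
- by move=> tq <- _; move: tq; rewrite !andbT => /andP [_ /andP [_ ?]].
- move=> tq wb _; subst w; move: tq => /and4P [_ _ le _].
  exfalso; move: le; rewrite /lamA !sub2 !in_setC (negbTE bA) aA /= andbF.
  by case: (x \in Aset n).
Qed.

Theorem theorem6 :
  exists c : nat, 0 < c /\
  exists N : nat, forall n : nat, N <= n ->
    exists lam : {set 'I_n} -> nat,
      (forall e : {set 'I_n}, e \in clique_edges n -> 0 < lam e) /\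
      forall H : {set {set 'I_n}},
        temporal_spanner 2 (clique_edges n) H lam -> n ^ 2 <= c * #|H|.
Proof.
exists 5; split => //; exists 2 => n n2.
exists (@lamA n); split.
  by move=> e _; rewrite /lamA; case: ifP => //; case: ifP.
move=> H Hs.
set A := Aset n.
have cA : #|A| = n./2 by rewrite card_lt_set // leq_half_double -addnn; lia.
have cB : #|~: A| = n - n./2 by rewrite cardsCs setCK card_ord cA.
have sub : (fun p : 'I_n * 'I_n => [set p.1; p.2]) @: setX A (~: A) \subset H.
  apply/subsetP=> e /imsetP [[a b]] /setXP [aA bB] ->.
  by apply: forced Hs aA _; rewrite -in_setC.
have inj : {in setX A (~: A) &, injective (fun p : 'I_n * 'I_n => [set p.1; p.2])}.
  move=> [a b] [a' b'] /setXP [aA bB] /setXP [aA' bB'] /= E.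
  have : a \in [set a'; b'] by rewrite -E !inE eqxx.
  rewrite !inE => /orP [/eqP ea | /eqP eb]; last by move: bB'; rewrite inE -eb aA.
  have : b \in [set a'; b'] by rewrite -E !inE eqxx orbT.
  rewrite !inE => /orP [/eqP ea' | /eqP eb]; last by rewrite ea eb.
  by move: bB; rewrite inE ea' -ea aA.
have := subset_leq_card sub; rewrite card_in_imset // cardsX cA cB => le.
apply: leq_trans (leq_mul (leqnn 5) le).
have h := odd_double_half n.
move: h; set h := n./2 => hn.
have : n./2 >= 1 by rewrite -/h; move: n2 hn; case: (odd n) => /=; lia.
rewrite -/h; move: hn; case: (odd n) => /= hn h1; nia.
Qed.
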